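(* Let $V$ be a real vector space of dimension $d$, and $G$ a group of affine-linear transformations of $V$ including all translations. Then for all $i,j\in\{0,\ldots,d\}$, $\lambda\in[0,\infty)$ and $x\in\mathcal{CB}(V,G)$, \[e_i(\rho_j(\lambda,x))=\rho_i(\lambda,e_j(x))=\begin{cases}\rho_i(\lambda,x)&\text{if }i=j,\\0&\text{if }i\neq j.\end{cases}\] In particular, $\rho_i$ takes values in $\mathcal{CB}_i(V,G)$.
   Context: $\mathcal{K}(V)$ is the set of nonempty compact convex subsets of $V$ with the Hausdorff metric topology. $\mathcal{CB}(V,G)$ is the quotient (with quotient topology) of the free Hausdorff topological abelian group $\mathbb{Z}\mathcal{K}(V)$ on $\mathcal{K}(V)$ (the Hausdorff topological abelian group with continuous map $X\mapsto[X]$ through which every continuous map from $\mathcal{K}(V)$ to a Hausdorff topological abelian group factors uniquely via a continuous homomorphism) by the closure of the subgroup generated by all $[B\cup C]-[B]-[C]+[B\cap C]$ ($B,C,B\cup C\in\mathcal{K}(V)$) and all $[X]-[gX]$ ($g\in G$); images are still written $[X]$. The dilation map $D$ is the unique continuous map $[0,\infty)\times\mathcal{CB}(V,G)\to\mathcal{CB}(V,G)$, homomorphism in its second variable, with $D(\lambda,[X])=[\lambda X]$. The dilation components are the uniquely determined continuous maps $\rho_0\colon\mathcal{CB}(V,G)\to\mathcal{CB}(V,G)$ and $\rho_1,\ldots,\rho_d\colon[0,\infty)\times\mathcal{CB}(V,G)\to\mathcal{CB}(V,G)$ with each $\rho_i(-,x)$ ($i\geqslant1$) a semigroup homomorphism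 on $([0,\infty),+)$ and $D(\lambda,x)=\rho_0(x)+\sum_{i=1}^d\rho_i(\lambda^i,x)$; by convention $\rho_0(\lambda,x)$ means $\rho_0(x)$. The idempotents are $e_0=\rho_0$, $e_i(x)=\rho_i(1,x)$ ($i\geqslant1$), and $\mathcal{CB}_i(V,G)=e_i(\mathcal{CB}(V,G))$. *)

(* Defs.v *)
From HB Require Import structures.
From mathcomp Require Import all_boot all_order all_algebra.
From mathcomp Require Import all_classical all_reals all_analysis.
Import Order.TTheory GRing.Theory Num.Theory numFieldNormedType.Exports.
Set Implicit Arguments.
Unset Strict Implicit.
Unset Printing Implicit Defensive.
Local Open Scope ring_scope.
Local Open Scope classical_set_scope.

(* The real vector space V of dimension d is modelled as 'rV[R]_d. *)

Definition kv (R : realType) (d : nat) (X : set 'rV[R]_d) : Prop :=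
  X !=set0 /\ @compact 'rV[R]_d X /\
  convex_set (X : set (convex_lmodType 'rV[R]_d)).

Definition hdist (R : realType) (d : nat) (X Y : set 'rV[R]_d) : R :=
  inf [set e : R | 0 <= e /\
        (forall x, X x -> exists2 y, Y y & `|x - y| <= e) /\
        (forall y, Y y -> exists2 x, X x & `|x - y| <= e)].

Definition kcont (R : realType) (d : nat) (T : topologicalType)
    (f : set 'rV[R]_d -> T) : Prop :=
  forall X, kv X -> forall N, nbhs (f X) N ->
    exists2 e : R, 0 < e & forall Y, kv Y -> hdist X Y < e -> N (f Y).

Definition affine_group (R : realType) (d : nat)
    (G : set ('rV[R]_d -> 'rV[R]_d)) : Prop :=
  [/\ (forall g, G g -> exists M : 'M[R]_d, exists b : 'rV[R]_d,
          M \in unitmx /\ g = (fun x => x *m M + b)),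
      G id,
      (forall g h, G g -> G h -> G (g \o h)),
      (forall g, G g -> exists2 h, G h & cancel g h /\ cancel h g) &
      (forall b : 'rV[R]_d, G (fun x => x + b))].

Definition cb_relations (R : realType) (d : nat)
    (G : set ('rV[R]_d -> 'rV[R]_d)) (H : zmodType) (f : set 'rV[R]_d -> H)
    : Prop :=
  (forall B C, kv B -> kv C -> kv (B `|` C) ->
      f (B `|` C) - f B - f C + f (B `&` C) = 0) /\
  (forall g X, G g -> kv X -> f X = f (g @` X)).

(* (A, iota) is CB(V,G) with X |-> [X], characterised by its universal
   property: the quotient of the free Hausdorff topological abelian group on
   K(V) by the closure of the subgroup generated by the relations is the
   universal Hausdorff topological abelian group receiving a continuous map
   from K(V) satisfying the relations. *)
Definition is_CB (R : realType) (d : nat) (G : set ('rV[R]_d -> 'rV[R]_d))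
    (A : topologicalZmodType) (iota : set 'rV[R]_d -> A) : Prop :=
  [/\ hausdorff_space A, kcont iota, cb_relations G iota &
      forall (H : topologicalZmodType), hausdorff_space H ->
      forall f : set 'rV[R]_d -> H, kcont f -> cb_relations G f ->
      exists phi : A -> H,
        let P := fun psi : A -> H =>
          [/\ (forall x y, psi (x + y) = psi x + psi y),
              continuous psi &
              (forall X, kv X -> psi (iota X) = f X)] in
        P phi /\ forall psi, P psi -> psi = phi].

Definition is_dilation (R : realType) (d : nat) (A : topologicalZmodType)
    (iota : set 'rV[R]_d -> A) (D : R -> A -> A) : Prop :=
  [/\ {within [set p : R * A | 0 <= p.1], continuous (fun p => D p.1 p.2)},
      (forall l x y, 0 <= l -> D l (x + y) = D l x + D l y) &
      (forall l X, 0 <= l -> kv X -> D l (iota X) = iota ((fun v => l *: v) @` X))].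

Definition is_dilation_components (R : realType) (d : nat)
    (A : topologicalZmodType) (D : R -> A -> A)
    (rho0 : A -> A) (rho : nat -> R -> A -> A) : Prop :=
  [/\ continuous rho0,
      (forall i, (1 <= i <= d)%N ->
         {within [set p : R * A | 0 <= p.1], continuous (fun p => rho i p.1 p.2)}),
      (forall i, (1 <= i <= d)%N -> forall l m x, 0 <= l -> 0 <= m ->
         rho i (l + m) x = rho i l x + rho i m x) &
      (forall l x, 0 <= l ->
         D l x = rho0 x + \sum_(1 <= i < d.+1) rho i (l ^+ i) x)].

Definition rhoc (R : realType) (A : zmodType) (rho0 : A -> A)
    (rho : nat -> R -> A -> A) (i : nat) (l : R) (x : A) : A :=
  if i == 0%N then rho0 x else rho i l x.

Definition eidem (R : realType) (A : zmodType) (rho0 : A -> A)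
    (rho : nat -> R -> A -> A) (i : nat) (x : A) : A :=
  rhoc rho0 rho i 1 x.

(* Main.v *)
Require Import Defs.
From HB Require Import structures.
From mathcomp Require Import all_boot all_order all_algebra.
From mathcomp Require Import all_classical all_reals all_analysis.
Import Order.TTheory GRing.Theory Num.Theory numFieldNormedType.Exports.
Local Open Scope ring_scope.
Local Open Scope classical_set_scope.

Section Alg.
Variables (R : realType) (A : zmodType).

Definition addnn (f : R -> A) := forall s t, 0 <= s -> 0 <= t -> f (s + t) = f s + f t.

Lemma addnn0 f : addnn f -> f 0 = 0.
Proof. by move=> h; have := h 0 0 (lexx _) (lexx _); rewrite addr0 => e; apply: (addrI (f 0)); rewrite -e addr0. Qed.

Lemma addnnMn f t n : addnn f -> 0 <= t -> f (t *+ n) = f t *+ n.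
Proof.
move=> h t0; elim: n => [|n IH]; first by rewrite !mulr0n addnn0.
by rewrite !mulrS h ?IH // mulrn_wge0.
Qed.

Lemma addnn_tors f N : addnn f -> (0 < N)%N -> (forall t, 0 <= t -> f t *+ N = 0) ->
  forall t, 0 <= t -> f t = 0.
Proof.
move=> h N0 H t t0.
have -> : t = (t / N%:R) *+ N by rewrite -mulr_natr divfK // pnatr_eq0 -lt0n.
by rewrite addnnMn ?H // divr_ge0.
Qed.

Lemma uniq0 (k : nat) (a : nat -> R -> A) :
  (forall i, (1 <= i <= k)%N -> addnn (a i)) ->
  (forall l, 0 <= l -> \sum_(1 <= i < k.+1) a i (l ^+ i) = 0) ->
  forall i, (1 <= i <= k)%N -> forall t, 0 <= t -> a i t = 0.
Proof.
elim: k a => [|k IH] a ha hs i; first by case: i.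
move=> ik.
pose a' := fun i t => a i t *+ (2 ^ k.+1 - 2 ^ i)%N.
have ha' : forall i, (1 <= i <= k)%N -> addnn (a' i).
  move=> j /andP[j1 jk] s t s0 t0; rewrite /a' -mulrnDl ha //.
  by rewrite j1 /= (leq_trans jk).
have hs' : forall l, 0 <= l -> \sum_(1 <= i < k.+1) a' i (l ^+ i) = 0.
  move=> l l0.
  have e1 := hs l l0; have e2 := hs (2 * l) (mulr_ge0 (ler0n _ 2) l0).
  have : (\sum_(1 <= i < k.+2) a i (l ^+ i)) *+ 2 ^ k.+1 - \sum_(1 <= i < k.+2) a i ((2 * l) ^+ i) = 0.
    by rewrite e1 e2 mul0rn subrr.
  rewrite -sumrMnl -sumrB big_nat_recr //= exprMn.
  have -> : (2 : R) ^+ k.+1 * l ^+ k.+1 = (l ^+ k.+1) *+ (2 ^ k.+1)%N.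
    by rewrite -natrX mulr_natl.
  have hk : addnn (a k.+1) by apply: ha; rewrite leqnn.
  rewrite (addnnMn _ _ _ hk) ?exprn_ge0 // subrr addr0 => H; rewrite -[RHS]H.
  apply: eq_big_nat => j /andP[j1 jk]; rewrite /a' exprMn.
  have -> : (2 : R) ^+ j * l ^+ j = (l ^+ j) *+ (2 ^ j)%N by rewrite -natrX mulr_natl.
  have hj : addnn (a j) by apply: ha; rewrite j1 /= ltnW.
  rewrite (addnnMn _ _ _ hj) ?exprn_ge0 //.
  by rewrite (GRing.mulrnBr _ (_ : 2 ^ j <= 2 ^ k.+1)%N) // leq_pexp2l // ltnW.
case: (ltnP i k.+1) => [ilt|ige].
  have ik' : (1 <= i <= k)%N by case/andP: ik => -> _.
  apply: (@addnn_tors (a i) (2 ^ k.+1 - 2 ^ i)%N); first exact: ha.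
    by rewrite subn_gt0 ltn_exp2l.
  by move=> t t0; apply: (IH a' ha' hs' i ik').
have ei : i = k.+1 by apply/eqP; rewrite eqn_leq ige andbT; case/andP: ik.
subst i.
have low : forall j, (1 <= j <= k)%N -> forall t, 0 <= t -> a j t = 0.
  move=> j jk t t0; apply: (@addnn_tors (a j) (2 ^ k.+1 - 2 ^ j)%N).
  - by apply: ha; case/andP: jk => -> /= /leqW.
  - by rewrite subn_gt0 ltn_exp2l //; case/andP: jk.
  - by move=> s s0; apply: (IH a' ha' hs' j jk).
  - by [].
move=> t t0.
have := hs (t `^ (k.+1%:R)^-1) (powR_ge0 _ _).
rewrite big_nat_recr //= big1_seq ?add0r.
  by rewrite -powR_mulrn ?powR_ge0 // -powRrM mulVf ?pnatr_eq0 // powRr1.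
move=> j; rewrite mem_index_iota => /andP[j1 jk].
by rewrite low ?j1 // exprn_ge0 // powR_ge0.
Qed.

Lemma uniq2 (k : nat) (c c' : A) (a b : nat -> R -> A) :
  (forall i, (1 <= i <= k)%N -> addnn (a i)) ->
  (forall i, (1 <= i <= k)%N -> addnn (b i)) ->
  (forall l, 0 <= l -> c + \sum_(1 <= i < k.+1) a i (l ^+ i) =
                       c' + \sum_(1 <= i < k.+1) b i (l ^+ i)) ->
  c = c' /\ forall i, (1 <= i <= k)%N -> forall t, 0 <= t -> a i t = b i t.
Proof.
move=> ha hb h.
have z : forall f : nat -> R -> A, (forall i, (1 <= i <= k)%N -> addnn (f i)) ->
    \sum_(1 <= i < k.+1) f i (0 ^+ i) = 0.
  move=> f hf; rewrite big1_seq // => j; rewrite mem_index_iota => /andP[j1 jk].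
  have -> : (0:R) ^+ j = 0 by rewrite expr0n; case: j j1 jk.
  by apply: addnn0; apply: hf; case/andP: jk => -> /=.
have cc : c = c' by have := h 0 (lexx _); rewrite !z // !addr0.
split => //; subst c'.
move=> i ik t t0; apply/eqP; rewrite -subr_eq0; apply/eqP.
apply: (@uniq0 k (fun i t => a i t - b i t)) => //.
  move=> j jk s u s0 u0; rewrite ha // hb //.
  by rewrite opprD addrACA.
move=> l l0; rewrite sumrB; apply/eqP; rewrite subr_eq0; apply/eqP.
by apply: (addrI c); apply: h.
Qed.

End Alg.
Arguments addnn {R A} f.

Local Open Scope convex_scope.
Lemma conv_lmodE (R : realType) (E : lmodType R) (p : {i01 R}) (x y : convex_lmodType E) :
  x <| p |> y = (p%:inum *: (x : E) + (1 - p%:inum) *: (y : E) : E).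
Proof. by []. Qed.

Lemma kv_scale (R : realType) (d : nat) (X : set 'rV[R]_d) (m : R) :
  kv X -> kv ((fun v => m *: v) @` X).
Proof.
case=> [[x Xx] [cX vX]]; split; first by exists (m *: x); exists x.
split.
  apply: continuous_compact => //; apply: continuous_subspaceT.
  exact: scaler_continuous.
move=> u v p; rewrite !inE => -[a Xa <-] [b Xb <-].
exists ((a : convex_lmodType _) <| p |> b); first by rewrite -inE; apply: vX; rewrite inE.
rewrite !conv_lmodE !scalerDr !scalerA; congr (_ *: _ + _ *: _); exact: mulrC.
Qed.

Section Dil.
Variables (R : realType) (d : nat) (G : set ('rV[R]_d -> 'rV[R]_d))
    (A : topologicalZmodType) (iota : set 'rV[R]_d -> A) (D : R -> A -> A).

Lemma Dcont : is_dilation iota D -> forall l, 0 <= l -> continuous (D l).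
Proof.
case=> hc _ _ l l0 x.
pose S := [set p : R * A | 0 <= p.1].
have hp : (fun y => (l, y)) @ x --> (l, x).
  exact: (@cvg_pair _ _ _ (nbhs x) (nbhs l) (nbhs x) _ _ _ _ _ (cvg_cst l) cvg_id).
have hw : (fun p : R * A => D p.1 p.2) @ within S (nbhs (l, x)) --> D l x.
  have := hc (l, x); rewrite /continuous_at.
  by move=> h; rewrite (@nbhs_subspace_in _ S (l, x)) //; exact: h.
move=> N NN; have := hw N NN; rewrite /within /= nbhs_simpl => h2.
have h3 : nbhs (l, x) [set p | S p -> N (D p.1 p.2)] by exact: h2.
have h4 := hp _ h3.
have h5 : nbhs x [set y | N (D l y)].
  by apply: (@filterS _ (nbhs x) _ _ _ _ h4) => y /=; apply.
exact: h5.
Qed.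

Lemma D0 : is_dilation iota D -> forall l, 0 <= l -> D l 0 = 0.
Proof.
case=> _ hadd _ l l0; have := hadd l 0 0 l0; rewrite addr0 => e.
by apply: (addrI (D l 0)); rewrite -e addr0.
Qed.

Lemma DN : is_dilation iota D -> forall l x, 0 <= l -> D l (- x) = - D l x.
Proof.
move=> hD l x l0; have := D0 hD _ l0; case: hD => _ hadd _.
rewrite -{1}(subrr x) hadd // => e.
by rewrite -[LHS]add0r -(addNr (D l x)) -addrA e addr0.
Qed.

Lemma Dmul : is_CB G iota -> is_dilation iota D ->
  forall l m, 0 <= l -> 0 <= m -> forall x, D l (D m x) = D (l * m) x.
Proof.
move=> hCB hD l m l0 m0 x.
have lm0 : 0 <= l * m by rewrite mulr_ge0.
case: hCB => hA hi [hr1 hr2] univ.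
have hD' := hD; case: hD' => _ hadd hiota.
pose f X := D (l * m) (iota X).
have kf : kcont f.
  move=> X kX N NN.
  have := Dcont hD _ lm0 (iota X) N NN => /= NN'.
  exact: (hi X kX _ NN').
have rf : cb_relations G f.
  split.
    move=> B C kB kC kBC; rewrite /f -!(DN hD) // -!hadd //.
    by rewrite hr1 // D0.
  by move=> g X Gg kX; rewrite /f (hr2 g X).
have [phi [_ un]] := univ A hA f kf rf.
have e1 : D (l * m) = phi.
  apply: un; split => //; first by move=> u v; rewrite hadd.
  exact: Dcont.
have e2 : D l \o D m = phi.
  apply: un; split.
  - by move=> u v /=; rewrite !hadd.
  - move=> u; apply: continuous_comp; [exact: Dcont | exact: Dcont].
  - move=> X kX /=; rewrite hiota // hiota //; last exact: kv_scale.
    rewrite /f hiota //; congr iota.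
    by rewrite image_comp; apply: eq_imagel => v _ /=; rewrite scalerA.
by rewrite -[RHS]/((D (l * m)) x) e1 -e2.
Qed.

End Dil.
Local Close Scope convex_scope.

Lemma morph0 (A : zmodType) (f : A -> A) : (forall u v, f (u + v) = f u + f v) -> f 0 = 0.
Proof. by move=> h; have := h 0 0; rewrite addr0 => e; apply: (addrI (f 0)); rewrite -e addr0. Qed.

Lemma sum_morph (A : zmodType) (f : A -> A) (F : nat -> A) m n :
  (forall u v, f (u + v) = f u + f v) ->
  f (\sum_(m <= j < n) F j) = \sum_(m <= j < n) f (F j).
Proof. by move=> h; rewrite (big_morph f h (@morph0 _ f h)). Qed.

Lemma sum_single (A : zmodType) (F : nat -> A) d i : (1 <= i <= d)%N ->
  \sum_(1 <= j < d.+1) (if j == i then F j else 0) = F i.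
Proof.
by move=> hi; rewrite -big_mkcond big_nat1_eq ltnS hi.
Qed.

Theorem lemma6p8 (R : realType) (d : nat) (G : set ('rV[R]_d -> 'rV[R]_d))
    (A : topologicalZmodType) (iota : set 'rV[R]_d -> A)
    (D : R -> A -> A) (rho0 : A -> A) (rho : nat -> R -> A -> A) :
  affine_group G ->
  is_CB G iota ->
  is_dilation iota D ->
  is_dilation_components d D rho0 rho ->
  forall (i j : nat), (i <= d)%N -> (j <= d)%N ->
  forall (l : R) (x : A), 0 <= l ->
    [/\ eidem rho0 rho i (rhoc rho0 rho j l x) = rhoc rho0 rho i l (eidem rho0 rho j x),
        rhoc rho0 rho i l (eidem rho0 rho j x) =
          (if i == j then rhoc rho0 rho i l x else 0) &
        exists y : A, rhoc rho0 rho i l x = eidem rho0 rho i y].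
Proof.
move=> _ hCB hD [_ _ hat hdec].
have hmul := @Dmul R d G A iota D hCB hD.
have hDadd : forall l u v, 0 <= l -> D l (u + v) = D l u + D l v.
  by case: hD.
have ant : forall i, (1 <= i <= d)%N -> forall z, addnn (fun t => rho i t z).
  by move=> i hi z s t s0 t0; apply: hat.
have stepA : forall u v, rho0 (u + v) = rho0 u + rho0 v /\
    forall i, (1 <= i <= d)%N -> forall t, 0 <= t -> rho i t (u + v) = rho i t u + rho i t v.
  move=> u v.
  apply: (@uniq2 R A d _ _ (fun i t => rho i t (u + v)) (fun i t => rho i t u + rho i t v)).
  - by move=> i hi; apply: ant.
  - move=> i hi s t s0 t0 /=; rewrite !(ant i hi) //.
    by rewrite addrACA.
  - move=> l l0; rewrite -hdec // hDadd // !hdec // big_split /=.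
    by rewrite addrACA.
have r0add : forall u v, rho0 (u + v) = rho0 u + rho0 v by move=> u v; case: (stepA u v).
have radd : forall i, (1 <= i <= d)%N -> forall t, 0 <= t -> forall u v,
    rho i t (u + v) = rho i t u + rho i t v.
  by move=> i hi t t0 u v; case: (stepA u v) => _ h; apply: h.
have stepB : forall lam z, 0 <= lam -> rho0 (D lam z) = rho0 z /\
    forall i, (1 <= i <= d)%N -> forall s, 0 <= s -> rho i s (D lam z) = rho i (lam ^+ i * s) z.
  move=> lam z lam0.
  apply: (@uniq2 R A d _ _ (fun i t => rho i t (D lam z)) (fun i t => rho i (lam ^+ i * t) z)).
  - by move=> i hi; apply: ant.
  - move=> i hi s t s0 t0 /=; rewrite mulrDr; apply: ant => //; by rewrite mulr_ge0 ?exprn_ge0.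
  - move=> mu mu0; rewrite -hdec // hmul // hdec ?mulr_ge0 //; congr (_ + _).
    by apply: eq_bigr => i _; rewrite exprMn mulrC.
have stepC : forall i, (1 <= i <= d)%N -> forall s, 0 <= s -> forall z,
    rho i s (rho0 z) = 0 /\
    forall j, (1 <= j <= d)%N -> forall t, 0 <= t ->
      rho i s (rho j t z) = if j == i then rho i (t * s) z else 0.
  move=> i hi s s0 z.
  apply: (@uniq2 R A d _ _ (fun j t => rho i s (rho j t z))
            (fun j t => if j == i then rho i (t * s) z else 0)).
  - move=> j hj u v u0 v0 /=; rewrite (ant j hj) // radd //.
  - move=> j hj u v u0 v0 /=; case: ifP => _; last by rewrite addr0.
    by rewrite mulrDl; apply: ant => //; rewrite mulr_ge0.
  - move=> lam lam0; rewrite sum_single // add0r.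
    case: (stepB lam z lam0) => _ h; rewrite -h //.
    by rewrite hdec // radd // (@sum_morph _ (rho i s) _ _ _ (radd i hi s s0)).
have stepD : forall z, rho0 (rho0 z) = rho0 z /\
    forall j, (1 <= j <= d)%N -> forall t, 0 <= t -> rho0 (rho j t z) = 0.
  move=> z.
  apply: (@uniq2 R A d _ _ (fun j t => rho0 (rho j t z)) (fun j t => 0)).
  - by move=> j hj u v u0 v0 /=; rewrite (ant j hj) // r0add.
  - by move=> j hj u v u0 v0 /=; rewrite addr0.
  - move=> lam lam0; rewrite [X in _ = _ + X]big1 // addr0.
    case: (stepB lam z lam0) => h _; rewrite -[RHS]h.
    by rewrite hdec // r0add (@sum_morph _ rho0 _ _ _ r0add).
have key : forall i j, (i <= d)%N -> (j <= d)%N -> forall l x, 0 <= l ->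
    eidem rho0 rho i (rhoc rho0 rho j l x) = rhoc rho0 rho i l (eidem rho0 rho j x) /\
    rhoc rho0 rho i l (eidem rho0 rho j x) = (if i == j then rhoc rho0 rho i l x else 0).
  move=> i j hi hj l x l0; rewrite /eidem /rhoc.
  case: (posnP i) => [->|ip]; case: (posnP j) => [->|jp] /=.
  - by case: (stepD x).
  - have hj' : (1 <= j <= d)%N by rewrite jp hj.
    by case: (stepD x) => _ h; rewrite h // h // ?ler01 // eq_sym (gtn_eqF jp).
  - have hi' : (1 <= i <= d)%N by rewrite ip hi.
    rewrite (gtn_eqF ip); case: (stepC i hi' 1 ler01 x) => -> _.
    by case: (stepC i hi' l l0 x) => -> _.
  - have hi' : (1 <= i <= d)%N by rewrite ip hi.
    have hj' : (1 <= j <= d)%N by rewrite jp hj.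
    case: (stepC i hi' 1 ler01 x) => _ h1; case: (stepC i hi' l l0 x) => _ h2.
    by rewrite h1 // h2 // mulr1 mul1r eq_sym.
move=> i j hi hj l x l0.
have [k1 k2] := key i j hi hj l x l0.
split => //.
exists (rhoc rho0 rho i l x).
have [k3 k4] := key i i hi hi l x l0.
by rewrite k3 k4 eqxx.
Qed.
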